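(* For an idempotent semiring $S$ the following are equivalent: (1) $S$ satisfies both $xyz\approx xzy$ and $x\approx xyx+x+xyx$; (2) $S$ satisfies $xz\approx xzy+xz+xzy$; (3) $\mathcal{L}^{\bullet}$ is the least distributive lattice congruence on $S$ (equivalently, $S$ satisfies $x\approx xy+x+xy$). In particular, for such $S$ the multiplicative reduct $(S,\cdot)$ is a left normal band.
   Context: An idempotent semiring is an algebra $(S,+,\cdot)$ with $(S,+)$, $(S,\cdot)$ bands and both distributive laws; addition not assumed commutative. $a\,\mathcal{L}^{\bullet}\,b$ iff $ab=a$ and $ba=b$. A distributive lattice congruence is a congruence $\rho$ with $S/\rho$ satisfying $x+y\approx y+x$, $xy\approx yx$, $x+xy\approx x$. A left normal band is a band satisfying $xyz\approx xzy$. *)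

(* Defs.v *)
Section Defs.
Context {S : Type}.

(* (S,+,.) is an idempotent semiring: both reducts are bands (associative and
   idempotent semigroups) and both distributive laws hold.  Addition is not
   assumed commutative. *)
Definition idempotent_semiring (add mul : S -> S -> S) : Prop :=
  (forall x y z, add x (add y z) = add (add x y) z) /\
  (forall x, add x x = x) /\
  (forall x y z, mul x (mul y z) = mul (mul x y) z) /\
  (forall x, mul x x = x) /\
  (forall x y z, mul x (add y z) = add (mul x y) (mul x z)) /\
  (forall x y z, mul (add x y) z = add (mul x z) (mul y z)).

Definition Lbullet (mul : S -> S -> S) (a b : S) : Prop :=
  mul a b = a /\ mul b a = b.

Definition congruence (add mul : S -> S -> S) (rho : S -> S -> Prop) : Prop :=
  (forall x, rho x x) /\
  (forall x y, rho x y -> rho y x) /\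
  (forall x y z, rho x y -> rho y z -> rho x z) /\
  (forall x y x' y', rho x x' -> rho y y' -> rho (add x y) (add x' y')) /\
  (forall x y x' y', rho x x' -> rho y y' -> rho (mul x y) (mul x' y')).

(* distributive lattice congruence: S/rho satisfies x+y = y+x, xy = yx,
   x + xy = x (written out on representatives) *)
Definition dl_congruence (add mul : S -> S -> S) (rho : S -> S -> Prop) : Prop :=
  congruence add mul rho /\
  (forall x y, rho (add x y) (add y x)) /\
  (forall x y, rho (mul x y) (mul y x)) /\
  (forall x y, rho (add x (mul x y)) x).

Definition least_dl_congruence (add mul : S -> S -> S) (rho : S -> S -> Prop) : Prop :=
  dl_congruence add mul rho /\
  (forall sigma, dl_congruence add mul sigma -> forall x y, rho x y -> sigma x y).

(* left normal band: xyz = xzy (the band axioms are part of idempotent_semiring) *)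
Definition left_normal (mul : S -> S -> S) : Prop :=
  forall x y z, mul x (mul y z) = mul x (mul z y).

End Defs.

(* Main.v *)
Require Import Defs.
From Corelib Require Import ssreflect.

Section X.
Context (S : Type) (add mul : S -> S -> S).
Hypothesis aA : forall x y z, add x (add y z) = add (add x y) z.
Hypothesis aI : forall x, add x x = x.
Hypothesis mA : forall x y z, mul x (mul y z) = mul (mul x y) z.
Hypothesis mI : forall x, mul x x = x.
Hypothesis dL : forall x y z, mul x (add y z) = add (mul x y) (mul x z).
Hypothesis dR : forall x y z, mul (add x y) z = add (mul x z) (mul y z).
Hypothesis H : forall x y, x = add (add (mul x y) x) (mul x y).

Lemma absL x y : add x (mul x y) = x.
Proof. rewrite {1}(H x y) -(aA _ (mul x y) (mul x y)) aI -H //. Qed.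
Lemma absR x y : add (mul x y) x = x.
Proof. rewrite {2}(H x y) !aA aI -H //. Qed.
Lemma LR x y : mul x (mul y x) = mul x y.
Proof.
  have e : mul (mul x y) x = mul (mul x y) (add (mul x y) x) by rewrite absR.
  rewrite dL mI absL in e. rewrite mA //.
Qed.
Lemma LR3 x y z : mul x (mul y (mul z x)) = mul x (mul y z).
Proof. have := LR x (mul y z). rewrite -!mA //. Qed.
Lemma LRa x y z : mul (mul x y) (mul x z) = mul x (mul y z).
Proof. rewrite mA -(mA x y x) LR -mA //. Qed.
Lemma Vz x y z : mul x (mul z (mul y z)) = mul x (mul z y).
Proof.
  transitivity (mul (mul x (mul z (mul y x))) z); first by rewrite LR3 -!mA.
  have := LR (mul x z) y. rewrite -!mA => ->. by [].
Qed.
Lemma LN x y z : mul x (mul y z) = mul x (mul z y).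
Proof.
  set u := mul x (mul y z). set v := mul x (mul z y).
  have sq : add (mul x y) (mul x z) = add (add (add (mul x y) u) v) (mul x z).
  { rewrite -{1}(mI (add (mul x y) (mul x z))) dR !dL !mI !LRa !aA //. }
  have uz : mul u z = u by rewrite /u -!mA mI.
  have vz : mul v z = v by rewrite /v -!mA Vz.
  have uy : mul u y = u by rewrite /u -!mA Vz.
  have vy : mul v y = v by rewrite /v -!mA mI.
  have e1 : add u (mul x z) = mul x z.
  { have := f_equal (fun t => mul t z) (absR x y). rewrite /= dR -mA //. }
  have e2 : add (mul x y) v = mul x y.
  { have := f_equal (fun t => mul t y) (absL x z). rewrite /= dR -mA //. }
  have s2 := f_equal (fun t => mul t y) sq. rewrite /= !dR uy vy -!mA mI in s2.
  fold v in s2. rewrite e2 -(aA _ v v) aI in s2.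
  have s3 := f_equal (fun t => mul t z) s2. rewrite /= !dR uz vz -!mA in s3.
  fold u in s3. rewrite aI in s3.
  have s4 := f_equal (fun t => mul t z) sq. rewrite /= !dR uz vz -!mA mI in s4.
  fold u in s4. rewrite e1 in s4.
  have s5 := f_equal (fun t => mul t y) s4. rewrite /= !dR uy vy -!mA in s5.
  fold v in s5. rewrite (aI u) -(aA u v v) aI in s5.
  by rewrite s3 -s5.
Qed.

Lemma LbAdd x x' y y' : Lbullet mul x x' -> Lbullet mul y y' ->
  mul (add x y) (add x' y') = add x y.
Proof.
  move=> [h1 h2] [h3 h4].
  have e1 : mul x y' = mul x y by rewrite -{1}h4 LN h3.
  have e2 : mul y x' = mul y x by rewrite -{1}h2 LN h1.
  rewrite dR !dL h1 h3 e1 e2.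
  rewrite -[in RHS](mI (add x y)) dR !dL !mI !aA //.
Qed.
Lemma LbMul x x' y y' : Lbullet mul x x' -> Lbullet mul y y' ->
  mul (mul x y) (mul x' y') = mul x y.
Proof.
  move=> [h1 h2] [h3 h4].
  rewrite mA -(mA x y x') LN mA h1 -mA h3 //.
Qed.
Lemma c3L : least_dl_congruence add mul (Lbullet mul).
Proof.
  split; last first.
  { move=> sigma [[r [s [t [ca cm]]]] [cc [cmm cabs]]] x y [h1 h2].
    have := cmm x y. rewrite h1 h2 //. }
  split; [split; [|split; [|split; [|split]]]|split; [|split]].
  - move=> x; split; apply mI.
  - move=> x y [h1 h2]; split => //.
  - move=> x y z [h1 h2] [h3 h4]; split.
    + rewrite -h1 -mA h3 //.
    + rewrite -h4 -mA h2 //.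
  - move=> x y x' y' h1 h2; split; apply LbAdd => //; by case: h1; case: h2.
  - move=> x y x' y' h1 h2; split; apply LbMul => //; by case: h1; case: h2.
  - move=> x y; split; rewrite dR !dL !mI ?absR ?absL //.
  - move=> x y; split; rewrite -!mA; [rewrite (mA y y) mI | rewrite (mA x x) mI]; apply LR.
  - move=> x y; rewrite absL; split; apply mI.
Qed.
End X.

Theorem theorem4p8 (S : Type) (add mul : S -> S -> S)
  (HS : idempotent_semiring add mul) :
  let c1 := (forall x y z, mul (mul x y) z = mul (mul x z) y) /\
            (forall x y, x = add (add (mul (mul x y) x) x) (mul (mul x y) x)) in
  let c2 := forall x y z, mul x z = add (add (mul (mul x z) y) (mul x z)) (mul (mul x z) y) in
  let c3 := least_dl_congruence add mul (Lbullet mul) in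
  let c3' := forall x y, x = add (add (mul x y) x) (mul x y) in
  ((c1 <-> c2) /\ (c2 <-> c3) /\ (c3 <-> c3')) /\
  (c1 -> left_normal mul).
Proof.
  case: HS => [aA [aI [mA [mI [dL dR]]]]].
  move=> c1 c2 c3 c3'.
  have c2_3' : c2 -> c3'.
  { move=> h x y. have := h x y x. rewrite !mI //. }
  have c3'_2 : c3' -> c2 by move=> h x y z; apply: h.
  have c3'_1 : c3' -> c1.
  { move=> h; split.
    - move=> x y z. rewrite -!mA. apply: LN => //.
    - move=> x y. rewrite -mA (@LR _ _ _ aA aI mA mI dL h). apply h. }
  have c1_2 : c1 -> c2.
  { move=> [h1 h2] x y z.
    have e : mul (mul (mul x z) y) (mul x z) = mul (mul x z) y.
    { rewrite mA (h1 (mul x z) y x) (h1 x z x) mI (h1 (mul x z) y z) -(mA x z z) mI //. }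
    have := h2 (mul x z) y. rewrite e //. }
  have c3'_3 : c3' -> c3 by move=> h; apply: c3L.
  have c3_3' : c3 -> c3'.
  { move=> [[_ [cc [cmm cabs]]] _] x y.
    have [_ h] := cabs x y. rewrite dL mI mA mI in h.
    have [h' _] := cmm x y. rewrite mA -(mA x y y) mI in h'.
    have [k _] := cc x (mul x y). rewrite h in k.
    rewrite dL mA !mI in k. by rewrite k h. }
  split; first by split; [split|split; split]; tauto.
  move=> [h1 _] x y z. rewrite !mA h1 //.
Qed.
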